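(* Fix $\hat P_0\in\mathbb S^n_+$. Let $\mathcal C(\hat P_0)$ be the set of all matrices $\hat P_i$, $i\in\mathbb Z_+$, generated by the inexact value iteration $\hat P_{i+1}=\mathcal R(\hat P_i,S)+\Delta_i$ started from $\hat P_0$, over all disturbance sequences $\{\Delta_i\}_{i\ge0}\subset\mathbb S^n$ with $\sup_{i}\|\Delta_i\|_2<\lambda_{\min}(S)$. Then the closure $\overline{\mathcal C(\hat P_0)}$ is compact.
   Context: Let $n,m\ge 1$, $A\in\mathbb R^{n\times n}$, $B\in\mathbb R^{n\times m}$, $S\in\mathbb S^n_{++}$, $R\in\mathbb S^m_{++}$, with $(A,B)$ stabilizable. Here $\mathbb S^n$, $\mathbb S^n_+$, $\mathbb S^n_{++}$ denote the real symmetric, symmetric positive semidefinite, and symmetric positive definite $n\times n$ matrices; $\|\cdot\|_2$ is the spectral norm; $\lambda_{\min}$ is the smallest eigenvalue. For $P\in\mathbb S^n_+$ and $S'\in\mathbb S^n$, the Riccati operator is $\mathcal R(P,S')=A^\top PA-A^\top PB(R+B^\top PB)^{-1}B^\top PA+S'$. *)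

(* Defs.v *)
From HB Require Import structures.
From mathcomp Require Import all_boot all_order all_algebra.
From mathcomp Require Import all_classical all_reals all_analysis.
From mathcomp Require Import complex.
Set Implicit Arguments. Unset Strict Implicit. Unset Printing Implicit Defensive.
Import Order.TTheory GRing.Theory Num.Theory.
Import numFieldNormedType.Exports.
Local Open Scope ring_scope.
Local Open Scope classical_set_scope.

Section Defs.
Variable R : realType.

Definition symmetric n (P : 'M[R]_n) : Prop := P^T = P.
Definition psd n (P : 'M[R]_n) : Prop :=
  symmetric P /\ forall x : 'cV[R]_n, 0 <= (x^T *m P *m x) 0 0.
Definition pd n (P : 'M[R]_n) : Prop :=
  symmetric P /\ forall x : 'cV[R]_n, x != 0 -> 0 < (x^T *m P *m x) 0 0.

Definition spec_norm n (M : 'M[R]_n) : R :=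
  sup [set Num.sqrt (((M *m x)^T *m (M *m x)) 0 0) |
        x in [set x : 'cV[R]_n | (x^T *m x) 0 0 = 1]].

Definition lambda_min n (M : 'M[R]_n) : R :=
  inf [set a : R | eigenvalue M a].

Definition schur_stable n (M : 'M[R]_n) : Prop :=
  forall z : R[i],
    root (map_poly (fun x : R => (x%:C)%C) (char_poly M)) z -> `|z| < 1.

Definition stabilizable n m (A : 'M[R]_n) (B : 'M[R]_(n, m)) : Prop :=
  exists K : 'M[R]_(m, n), schur_stable (A + B *m K).

Definition riccati n m (A : 'M[R]_n) (B : 'M[R]_(n, m)) (Rm : 'M[R]_m)
  (P S' : 'M[R]_n) : 'M[R]_n :=
  A^T *m P *m A
  - A^T *m P *m B *m invmx (Rm + B^T *m P *m B) *m B^T *m P *m A + S'.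

Fixpoint inexact_vi n m (A : 'M[R]_n) (B : 'M[R]_(n, m)) (Rm : 'M[R]_m)
  (S P0 : 'M[R]_n) (Delta : nat -> 'M[R]_n) (i : nat) : 'M[R]_n :=
  match i with
  | 0 => P0
  | i'.+1 => riccati A B Rm (inexact_vi A B Rm S P0 Delta i') S + Delta i'
  end.

(* C(P0): all iterates over all admissible disturbance sequences;
   "sup_i ||Delta_i||_2 < lambda_min S" written as: some c < lambda_min S
   bounds every ||Delta_i||_2 *)
Definition reach_set n m (A : 'M[R]_n) (B : 'M[R]_(n, m)) (Rm : 'M[R]_m)
  (S P0 : 'M[R]_n) : set 'M[R]_n :=
  [set P | exists (Delta : nat -> 'M[R]_n) (i : nat),
     (forall k, symmetric (Delta k)) /\
     (exists c : R, c < lambda_min S /\ forall k, spec_norm (Delta k) <= c) /\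
     P = inexact_vi A B Rm S P0 Delta i].

End Defs.

(* Main.v *)
Require Import Defs.
From HB Require Import structures.
From mathcomp Require Import all_boot all_order all_algebra.
From mathcomp Require Import all_classical all_reals all_analysis.
From mathcomp Require Import complex.
Import Order.TTheory GRing.Theory Num.Theory.
Import numFieldNormedType.Exports.
Local Open Scope ring_scope.
Local Open Scope classical_set_scope.

From mathcomp Require Import ring lra.
Set Implicit Arguments. Unset Strict Implicit. Unset Printing Implicit Defensive.

Lemma vec_mx_entry (T : Type) m n (v : 'rV[T]_(m * n)) i j :
  vec_mx v i j = v 0 (mxvec_index i j).
Proof. by rewrite -[in RHS](vec_mxK v) mxvecE. Qed.

Lemma vec_mx_cont (R : realType) m n :
  continuous (@vec_mx R m n).
Proof.
move=> v; apply/(@cvg_ballP _ _ _ _ (nbhs_filter v)) => e e0.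
have := @nbhsx_ballx _ _ v _ e0; apply: filterS => u [_ h].
split => // i j; rewrite !vec_mx_entry; exact: h.
Qed.

Lemma compact_box (R : realType) n (c : R) :
  compact [set M : 'M[R]_(n, n) | forall i j, `|M i j| <= c].
Proof.
set K := [set _ | _].
have Kcl : closed K.
  have -> : K = \bigcap_(ij in [set: 'I_n * 'I_n])
      ((fun M : 'M[R]_(n,n) => `|M ij.1 ij.2|) @^-1` [set x : R | x <= c]).
    apply/seteqP; split=> M /=; first by move=> h [i j] _; exact: h.
    by move=> h i j; exact: (h (i, j)).
  apply: closed_bigI => ij _; apply: preimage_closed; last exact: closed_le.
  move=> M _; apply: continuous_comp; first exact: coord_continuous.
  exact: norm_continuous.
pose V := [set v : 'rV[R]_(n * n) | forall k, `[(- c), c]%classic (v 0 k)].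
have Vc : compact V.
  by apply: (@rV_compact _ _ (fun=> `[(- c), c]%classic)) => ?; exact: segment_compact.
have Ic : compact [set vec_mx v | v in V].
  apply: continuous_compact Vc; apply: continuous_subspaceT => v.
  exact: vec_mx_cont.
apply: (subclosed_compact Kcl Ic).
move=> M KM; exists (mxvec M); last exact: mxvecK.
move=> k; rewrite /= in_itv /= -ler_norml.
by case: (mxvec_indexP k) => i j; rewrite mxvecE; exact: KM.
Qed.

Lemma compact_closure_bounded (R : realType) n (X : set 'M[R]_(n, n)) (c : R) :
  (forall M, X M -> forall i j, `|M i j| <= c) -> compact (closure X).
Proof.
move=> hX; have := @compact_box R n c; move=> Kc.
apply: (subclosed_compact _ Kc); first exact: closed_closure.
have Kcl : closed [set M : 'M[R]_n | forall i j, `|M i j| <= c].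
  by apply: compact_closed Kc; exact: norm_hausdorff.
move=> M; rewrite closureEbigcap; apply; split => //.

Qed.

Section Decay.
Local Notation nc := Normc.normc.
Local Open Scope complex_scope.

Lemma nc_ge0 (R : rcfType) (x : R[i]) : 0 <= nc x.
Proof. by case: x => a b; rewrite /Normc.normc sqrtr_ge0. Qed.

Lemma sum_recur (R : realType) (r c : R) (a b : nat -> R) :
  0 <= r < 1 -> (forall k, 0 <= a k) -> (forall k, a k.+1 <= r * a k + b k) ->
  (forall K, \sum_(k < K) b k <= c) ->
  forall K, \sum_(k < K) a k <= (a 0%N + c) / (1 - r).
Proof.
move=> /andP[r0 r1] a0 ab bc K.
have c0 : 0 <= c by have := bc 0%N; rewrite big_ord0.
rewrite ler_pdivlMr ?subr_gt0 //.
case: K => [|K]; first by rewrite big_ord0 mul0r addr_ge0.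
have h1 : \sum_(k < K) a k <= \sum_(k < K.+1) a k.
  by rewrite big_ord_recr /= lerDl.
have h2 : \sum_(k < K) a k.+1 <= r * \sum_(k < K) a k + \sum_(k < K) b k.
  rewrite mulr_sumr -big_split /=; apply: ler_sum => k _; exact: ab.
have h3 := bc K.
have h4 : 0 <= \sum_(k < K.+1) a k by apply: sumr_ge0 => k _.
rewrite big_ord_recl /= in h4 *.
move: h1 h2 h3 h4; rewrite big_ord_recl /=.
set s1 := \sum_(k < K) a k.
set s2 := \sum_(i < K) a (bump 0 i).
set sb := \sum_(k < K) b k.
have -> : s2 = \sum_(k < K) a k.+1 by [].
set s3 := \sum_(k < K) a k.+1.
move=> h1 h2 h3 h4; nra.
Qed.

Lemma decay (R : realType) n (M : 'M[R[i]]_n) (zs : seq R[i]) :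
  (forall z, z \in zs -> nc z < 1) ->
  forall p (X : 'M[R[i]]_(n, p)), (\prod_(z <- zs) (M - z%:M)) *m X = 0 ->
  forall i j, exists c : R, forall K, \sum_(k < K) nc ((M ^+ k *m X) i j) <= c.
Proof.
elim/last_ind: zs => [_ p X|zs z IH hz p X].
  rewrite big_nil mul1mx => -> i j; exists 0 => K.
  by rewrite big1 // => k _; rewrite mulmx0 mxE /Normc.normc /= expr0n addr0 sqrtr0.
rewrite big_rcons /= -mulmxE -mulmxA => hX i j.
have hz' : forall w, w \in zs -> nc w < 1.
  by move=> w hw; apply: hz; rewrite mem_rcons in_cons hw orbT.
have [c hc] := IH hz' _ _ hX i j.
have zlt : nc z < 1 by apply: hz; rewrite mem_rcons mem_head.
exists ((nc ((M ^+ 0 *m X) i j) + c) / (1 - nc z)) => K.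
apply: (@sum_recur R (nc z) c (fun k => nc ((M ^+ k *m X) i j)) (fun k => nc ((M ^+ k *m ((M - z%:M) *m X)) i j))) => //.
- by rewrite nc_ge0.
- by move=> k; exact: nc_ge0.
- move=> k.
  have -> : (M ^+ k.+1 *m X) i j = z * (M ^+ k *m X) i j + (M ^+ k *m ((M - z%:M) *m X)) i j.
    rewrite mulmxA mulmxBr mul_mx_scalar mulmxBl -scalemxAl !mxE.
    by rewrite exprSr mulmxE; ring.
  apply: le_trans (le_normcD _ _) _; rewrite Normc.normcM; exact: lexx.
Qed.

Lemma nc_norm (R : rcfType) (z : R[i]) : `|z| = (nc z)%:C.
Proof. by case: z => a b; rewrite normc_def. Qed.

Lemma nc_real (R : rcfType) (r : R) : nc (r%:C) = `|r|.
Proof. by rewrite /Normc.normc /= expr0n addr0 sqrtr_sqr. Qed.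

Lemma map_mxX' (R : realType) n (N : 'M[R]_n.+1) k :
  map_mx (real_complex R) (N ^+ k) = (map_mx (real_complex R) N) ^+ k.
Proof.
elim: k => [|k IH]; first by rewrite !expr0 map_mx1.
by rewrite !exprS -!mulmxE map_mxM IH.
Qed.

Lemma schur_summable (R : realType) n (N : 'M[R]_n.+1) : schur_stable N ->
  forall (x : 'cV[R]_n.+1) a, exists c : R,
    forall K, \sum_(k < K) `|(N ^+ k *m x) a 0| <= c.
Proof.
move=> hN x a.
pose f := real_complex R.
pose Nc := map_mx f N.
have [rs hrs] := closed_field_poly_normal (char_poly Nc).
have lc : lead_coef (char_poly Nc) = 1 by apply/monicP; exact: char_poly_monic.
rewrite lc scale1r in hrs.
have hz : forall z, z \in rs -> nc z < 1.
  move=> z zin; have := hN z; rewrite /Nc.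
  rewrite (map_char_poly f) -/Nc hrs root_prod_XsubC => /(_ zin).
  by rewrite nc_norm ltcR.
have CH := Cayley_Hamilton Nc.
rewrite hrs rmorph_prod /= in CH.
have hX : (\prod_(z <- rs) (Nc - z%:M)) *m (map_mx f x) = 0.
  suff -> : \prod_(z <- rs) (Nc - z%:M) = 0 by rewrite mul0mx.
  rewrite -CH; apply: eq_bigr => z _.
  by rewrite rmorphB /= horner_mx_X horner_mx_C.
have [c hc] := decay hz hX a 0.
exists c => K; apply: le_trans (hc K); rewrite le_eqVlt; apply/orP; left; apply/eqP.
apply: eq_bigr => k _.
rewrite /Nc -map_mxX' -map_mxM [X in nc X]mxE.
by rewrite nc_real.
Qed.

End Decay.

Section Main.
Variable R : realType.
Definition qf n (P : 'M[R]_n) (x : 'cV[R]_n) : R := (x^T *m P *m x) 0 0.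

Lemma tr11 (a : 'M[R]_1) : a^T = a.
Proof. by apply/matrixP => i j; rewrite !ord1 mxE. Qed.

Lemma quad_shift m (G : 'M[R]_m) (v w : 'cV[R]_m) :
  G^T = G -> G \in unitmx ->
  (v + invmx G *m w)^T *m G *m (v + invmx G *m w) =
  v^T *m G *m v + v^T *m w + w^T *m v + w^T *m invmx G *m w.
Proof.
move=> sG uG.
have sGi : (invmx G)^T = invmx G by rewrite trmx_inv sG.
rewrite [(v + _)^T]linearD /= trmx_mul sGi !mulmxDl !mulmxDr.
rewrite -!mulmxA (mulmxA G) mulmxV // mul1mx (mulmxA (invmx G)) mulVmx // mul1mx.
by rewrite !addrA.
Qed.

Lemma compl_sq n m (P : 'M[R]_n) (Rm : 'M[R]_m) (B : 'M[R]_(n, m))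
  (y : 'cV[R]_n) (v : 'cV[R]_m) :
  P^T = P -> Rm^T = Rm -> (Rm + B^T *m P *m B) \in unitmx ->
  let G := Rm + B^T *m P *m B in
  let w := B^T *m P *m y in
  qf P (y + B *m v) + qf Rm v =
  qf P y - (w^T *m invmx G *m w) 0 0 + qf G (v + invmx G *m w).
Proof.
move=> sP sR uG G w.
have sG : G^T = G.
  by rewrite /G linearD /= !trmx_mul trmxK sP sR mulmxA.
have sGi : (invmx G)^T = invmx G by rewrite trmx_inv sG.
rewrite /qf.
have e1 : (y + B *m v)^T *m P *m (y + B *m v) =
  y^T *m P *m y + y^T *m P *m (B *m v) + (v^T *m w) + v^T *m (B^T *m P *m B) *m v.
  rewrite [(y + _)^T]linearD /= trmx_mul !mulmxDl !mulmxDr /w !mulmxA; rewrite !addrA; congr (_ + _).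
have e2 := quad_shift v w sG uG.
have e3 : w^T *m v = y^T *m P *m (B *m v).
  by rewrite /w !trmx_mul trmxK sP !mulmxA.
have e4 : v^T *m G *m v = v^T *m Rm *m v + v^T *m (B^T *m P *m B) *m v.
  by rewrite /G mulmxDr mulmxDl.
rewrite e1 e2 e3 e4.
set a1 := y^T *m P *m y. set a2 := y^T *m P *m (B *m v). set a3 := v^T *m w.
set a4 := v^T *m (B^T *m P *m B) *m v. set a5 := v^T *m Rm *m v.
set a6 := w^T *m invmx G *m w.
rewrite !mxE; ring.
Qed.

Lemma eadd (a b : 'M[R]_1) : (a + b) 0 0 = a 0 0 + b 0 0.
Proof. by rewrite mxE. Qed.
Lemma eopp (a : 'M[R]_1) : (- a) 0 0 = - a 0 0.
Proof. by rewrite mxE. Qed.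

Lemma qfD n (P Q : 'M[R]_n) x : qf (P + Q) x = qf P x + qf Q x.
Proof. by rewrite /qf mulmxDr mulmxDl mxE. Qed.

Lemma qf0 n (P : 'M[R]_n) : qf P 0 = 0.
Proof. by rewrite /qf mulmx0 mxE. Qed.

Lemma qf_mul n m (P : 'M[R]_n) (B : 'M[R]_(n, m)) z :
  qf (B^T *m P *m B) z = qf P (B *m z).
Proof. by rewrite /qf trmx_mul !mulmxA. Qed.

Lemma pos_unit n (G : 'M[R]_n) : (forall z, z != 0 -> 0 < qf G z) -> G \in unitmx.
Proof.
move=> hG; rewrite unitmxE unitfE; apply/negP => /det0P [u u0 uG].
have := hG u^T; rewrite trmx_eq0 => /(_ u0).
by rewrite /qf trmxK uG mul0mx mxE ltxx.
Qed.

Lemma qf_ric n m (A : 'M[R]_n) (B : 'M[R]_(n, m)) (Rm : 'M[R]_m) (P S : 'M[R]_n) x :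
  P^T = P ->
  qf (riccati A B Rm P S) x = qf P (A *m x)
   - ((B^T *m P *m (A *m x))^T *m invmx (Rm + B^T *m P *m B) *m (B^T *m P *m (A *m x))) 0 0
   + qf S x.
Proof.
move=> sP; rewrite /riccati /qf !mulmxDr !mulmxDl !eadd mulmxN mulNmx eopp.
congr (_ - _ + _).
  by rewrite trmx_mul !mulmxA.
by rewrite !trmx_mul trmxK sP !mulmxA.
Qed.


Lemma ric_sym n m (A : 'M[R]_n) (B : 'M[R]_(n, m)) (Rm : 'M[R]_m) (P S : 'M[R]_n) :
  P^T = P -> S^T = S -> Rm^T = Rm ->
  (riccati A B Rm P S)^T = riccati A B Rm P S.
Proof.
move=> sP sS sR.
have sGi : (invmx (Rm + B^T *m P *m B))^T = invmx (Rm + B^T *m P *m B).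
  rewrite trmx_inv; congr invmx.
  by rewrite linearD /= !trmx_mul trmxK sP sR mulmxA.
rewrite /riccati linearD linearB /= sS !trmx_mul !trmxK sP sGi !mulmxA.
done.
Qed.

Lemma pd_psd n (P : 'M[R]_n) : pd P -> forall z, 0 <= qf P z.
Proof.
move=> hP z; have [->|z0] := eqVneq z 0; first by rewrite qf0.
exact/ltW/hP.2.
Qed.

Lemma G_pos n m (B : 'M[R]_(n, m)) (Rm : 'M[R]_m) (P : 'M[R]_n) :
  psd P -> pd Rm -> forall z, qf (Rm + B^T *m P *m B) z = qf Rm z + qf P (B *m z).
Proof. by move=> _ _ z; rewrite qfD qf_mul. Qed.

Lemma G_unit n m (B : 'M[R]_(n, m)) (Rm : 'M[R]_m) (P : 'M[R]_n) :
  psd P -> pd Rm -> (Rm + B^T *m P *m B) \in unitmx.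
Proof.
move=> hP hR; apply: pos_unit => z z0; rewrite G_pos //.
apply: (lt_le_trans (hR.2 z z0)); rewrite lerDl; exact: hP.2.
Qed.

Lemma ric_lower n m (A : 'M[R]_n) (B : 'M[R]_(n, m)) (Rm : 'M[R]_m) (P S : 'M[R]_n) :
  psd P -> pd Rm -> forall x, qf S x <= qf (riccati A B Rm P S) x.
Proof.
move=> hP hR x.
have uG := G_unit B hP hR.
pose w := B^T *m P *m (A *m x).
pose v := - (invmx (Rm + B^T *m P *m B) *m w).
have := compl_sq (A *m x) v hP.1 hR.1 uG => /=.
rewrite /v addNr qf0 addr0 => e.
rewrite qf_ric ?hP.1 // -/w -e lerDr.
by apply: addr_ge0; [exact: hP.2 | exact: pd_psd].
Qed.

Lemma ric_upper n m (A : 'M[R]_n) (B : 'M[R]_(n, m)) (Rm : 'M[R]_m) (P S : 'M[R]_n) :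
  psd P -> pd Rm -> forall (K : 'M[R]_(m, n)) x,
  qf (riccati A B Rm P S) x <= qf P ((A + B *m K) *m x) + qf Rm (K *m x) + qf S x.
Proof.
move=> hP hR K x.
have uG := G_unit B hP hR.
have := compl_sq (A *m x) (K *m x) hP.1 hR.1 uG => /= e.
rewrite qf_ric ?hP.1 // [(A + _) *m x]mulmxDl -[B *m K *m x]mulmxA e lerD2r lerDl.
rewrite G_pos //; apply: addr_ge0; [exact: pd_psd | exact: hP.2].
Qed.

Lemma cs_sum n (f g : 'I_n -> R) :
  (\sum_i f i * g i) ^+ 2 <= (\sum_i f i ^+ 2) * (\sum_i g i ^+ 2).
Proof.
have h : 0 <= \sum_i \sum_j (f i * g j - f j * g i) ^+ 2.
  by apply: sumr_ge0 => i _; apply: sumr_ge0 => j _; exact: sqr_ge0.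
have e : \sum_i \sum_j (f i * g j - f j * g i) ^+ 2 =
   (\sum_i \sum_j f i ^+ 2 * g j ^+ 2) + (\sum_i \sum_j f j ^+ 2 * g i ^+ 2)
   - 2 * \sum_i \sum_j (f i * g i) * (f j * g j).
  rewrite mulr_sumr -big_split -sumrB /=; apply: eq_bigr => i _.
  rewrite mulr_sumr -big_split -sumrB /=; apply: eq_bigr => j _; ring.
have e2 : \sum_i \sum_j f j ^+ 2 * g i ^+ 2 = \sum_i \sum_j f i ^+ 2 * g j ^+ 2.
  by rewrite exchange_big.
have e3 : (\sum_i f i ^+ 2) * (\sum_i g i ^+ 2) = \sum_i \sum_j f i ^+ 2 * g j ^+ 2.
  by rewrite mulr_suml; apply: eq_bigr => i _; rewrite mulr_sumr.
have e4 : (\sum_i f i * g i) ^+ 2 = \sum_i \sum_j (f i * g i) * (f j * g j).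
  by rewrite expr2 mulr_suml; apply: eq_bigr => i _; rewrite mulr_sumr.
rewrite e3 e4; move: h; rewrite e e2; lra.
Qed.

Definition dot n (x y : 'cV[R]_n) : R := (x^T *m y) 0 0.

Lemma dotE n (x y : 'cV[R]_n) : dot x y = \sum_i x i 0 * y i 0.
Proof. by rewrite /dot mxE; apply: eq_bigr => i _; rewrite mxE. Qed.

Lemma dot_ge0 n (x : 'cV[R]_n) : 0 <= dot x x.
Proof. by rewrite dotE; apply: sumr_ge0 => i _; rewrite -expr2 sqr_ge0. Qed.

Lemma cs_dot n (x y : 'cV[R]_n) : dot x y ^+ 2 <= dot x x * dot y y.
Proof.
rewrite !dotE; have := cs_sum (fun i => x i 0) (fun i => y i 0).
have ex : forall z : 'cV[R]_n, \sum_i z i 0 ^+ 2 = \sum_i z i 0 * z i 0.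
  by move=> z; apply: eq_bigr => i _; rewrite expr2.
by rewrite !ex.
Qed.

Lemma dotZ n (k : R) (x : 'cV[R]_n) : dot (k *: x) (k *: x) = k ^+ 2 * dot x x.
Proof.
rewrite !dotE mulr_sumr; apply: eq_bigr => i _; rewrite !mxE; ring.
Qed.

Definition snset n (M : 'M[R]_n) := [set Num.sqrt (((M *m x)^T *m (M *m x)) 0 0) |
        x in [set x : 'cV[R]_n | (x^T *m x) 0 0 = 1]].

Lemma sn_ub n (M : 'M[R]_n) : has_ubound (snset M).
Proof.
exists (Num.sqrt (\sum_i \sum_j M i j ^+ 2)) => _ [u /= u1 <-].
apply: ler_wsqrtr; rewrite -/(dot _ _) dotE.
apply: ler_sum => i _.
have e : (M *m u) i 0 = \sum_j M i j * u j 0 by rewrite mxE.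
rewrite e -expr2; apply: le_trans (cs_sum _ _) _.
have -> : \sum_j u j 0 ^+ 2 = 1.
  by rewrite -u1 -/(dot u u) dotE; apply: eq_bigr => j _; rewrite expr2.
by rewrite mulr1.
Qed.

Lemma sn_ge0 n (M : 'M[R]_n.+1) : 0 <= spec_norm M.
Proof.
pose e : 'cV[R]_n.+1 := delta_mx 0 0.
have e1 : (e^T *m e) 0 0 = 1.
  rewrite -/(dot e e) dotE (bigD1 0) //= big1 ?addr0.
    by rewrite mxE eqxx mulr1.
  by move=> i i0; rewrite mxE (negbTE i0) mul0r.
have h := ub_le_sup (sn_ub M) (ex_intro2 _ _ e e1 erefl).
exact: le_trans (sqrtr_ge0 _) h.
Qed.

Lemma sn_sq n (M : 'M[R]_n.+1) (x : 'cV[R]_n.+1) :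
  dot (M *m x) (M *m x) <= spec_norm M ^+ 2 * dot x x.
Proof.
have [->|x0] := eqVneq x 0; first by rewrite mulmx0 /dot mulmx0 mxE mulr0.
have a0 : 0 < dot x x.
  rewrite lt_neqAle dot_ge0 andbT eq_sym; apply: contra x0 => /eqP.
  rewrite dotE => h; apply/eqP/matrixP => i j; rewrite ord1 mxE.
  have hs : \sum_i x i 0 ^+ 2 = 0.
    by rewrite -[RHS]h; apply: eq_bigr => k _; rewrite expr2.
  have := @psumr_eq0P _ _ predT (fun k => x k 0 ^+ 2) (fun k _ => sqr_ge0 _) hs i isT.
  by move/eqP; rewrite sqrf_eq0 => /eqP.
pose k := (Num.sqrt (dot x x))^-1.
have k2 : k ^+ 2 = (dot x x)^-1 by rewrite /k exprVn sqr_sqrtr // ltW.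
have u1 : ((k *: x)^T *m (k *: x)) 0 0 = 1.
  by rewrite -/(dot _ _) dotZ k2 mulVf // gt_eqF.
have := ub_le_sup (sn_ub M) (ex_intro2 _ _ _ u1 erefl).
rewrite -/(spec_norm M) -/(dot _ _) -scalemxAr dotZ k2 => h.
have h2 : (dot x x)^-1 * dot (M *m x) (M *m x) <= spec_norm M ^+ 2.
  rewrite -[leLHS]sqr_sqrtr; last by rewrite mulr_ge0 ?invr_ge0 ?dot_ge0 ?ltW.
  by rewrite lerXn2r // ?nnegrE ?sqrtr_ge0 ?sn_ge0.
by rewrite -ler_pdivrMr // mulrC.
Qed.


Section Spec.
Local Open Scope sesquilinear_scope.
Local Notation f := (real_complex R).
Lemma conj_real (r : R) : (f r)^* = f r.
Proof. by apply: conj_Creal; rewrite complex_real. Qed.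

Lemma map_conj_real m n (M : 'M[R]_(m, n)) : map_mx Num.conj (map_mx f M) = map_mx f M.
Proof. by apply/matrixP => i j; rewrite !mxE conj_real. Qed.

Lemma mapE m n (M : 'M[R]_(m, n)) i j : f (M i j) = (map_mx f M) i j.
Proof. by rewrite mxE. Qed.

Lemma eig_pos n (S : 'M[R]_n) a : pd S -> eigenvalue S a -> 0 < a.
Proof.
move=> hS /eigenvalueP [v vS v0].
have h := hS.2 v^T; rewrite trmx_eq0 v0 trmxK vS -scalemxAl mxE in h.
have d0 : 0 <= (v *m v^T) 0 0.
  rewrite mxE; apply: sumr_ge0 => i _; rewrite mxE -expr2; exact: sqr_ge0.
have := h isT; move: d0; set t := (v *m v^T) 0 0; nra.
Qed.

Lemma lmin_qf n (S : 'M[R]_n.+1) : pd S -> forall x, lambda_min S * dot x x <= qf S x.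
Proof.
move=> hS x.
pose Sc := map_mx f S.
have sS : S^T = S := hS.1.
have Sc_t : Sc^T = Sc by rewrite /Sc map_trmx sS.
have Sc_c : Sc^t* = Sc by rewrite Sc_t map_conj_real.
have Sc_n : Sc \is normalmx by apply/normalmxP; rewrite Sc_c.
pose U := spectralmx Sc; pose d := spectral_diag Sc.
have eqS : Sc = invmx U *m diag_mx d *m U := orthomx_spectralP Sc_n.
have Uu : U \is unitarymx := spectral_unitarymx Sc.
have Uunit : U \in unitmx := spectral_unit Sc.
have Ui : invmx U = U^t* := invmx_unitary Uu.
have dreal : d \is a mxOver Num.real.
  apply: hermitian_spectral_diag_real; apply: realsym_hermsym.
    by apply/is_hermitianmxP; rewrite expr0 scale1r map_mx_id.
  by apply/mxOverP => i j; rewrite mxE complex_real.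
have USc : U *m Sc = diag_mx d *m U.
  by rewrite {1}eqS !mulmxA mulmxV // mul1mx.
have dge : forall i, lambda_min S <= complex.Re (d 0 i).
  move=> i.
  have dr : f (complex.Re (d 0 i)) = d 0 i.
    by apply: RRe_real; exact: (mxOverP dreal).
  have eigc : eigenvalue Sc (d 0 i).
    apply/eigenvalueP; exists (row i U).
      rewrite -row_mul USc mul_diag_mx; apply/rowP => j.
      by rewrite !mxE.
    apply: contraTneq isT => r0.
    have : row i (U *m U^t* ) = 'e_i by move/unitarymxP: Uu => ->; rewrite row1.
    rewrite row_mul r0 mul0mx => /rowP /(_ i); rewrite !mxE eqxx /=.
    by rewrite eqxx => /eqP; rewrite eq_sym oner_eq0.
  have eig : eigenvalue S (complex.Re (d 0 i)).
    move: eigc; rewrite !eigenvalue_root_char -dr /Sc -map_char_poly fmorph_root //.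

  apply: ge_inf => //; exists 0 => a /= ha; apply/ltW; exact: eig_pos ha.
pose xc := map_mx f x.
pose y := U *m xc.
have xcT : xc^T *m U^t* = y^t*.
  by rewrite /y trmx_mul map_mxM map_trmx map_conj_real.
have eq1 : f (qf S x) = (y^t* *m diag_mx d *m y) 0 0.
  rewrite /qf (mapE (x^T *m S *m x)) !map_mxM -/Sc -/xc -map_trmx.
  by rewrite eqS Ui !mulmxA xcT -!mulmxA.
have eq2 : f (dot x x) = (y^t* *m y) 0 0.
  rewrite /dot (mapE (x^T *m x)) !map_mxM -/xc -map_trmx.
  by rewrite -xcT /y mulmxA -(mulmxA _ _ U) -Ui mulVmx // mulmx1.
clearbody y.
have : f (lambda_min S * dot x x) <= f (qf S x).
  rewrite rmorphM /= eq1 eq2 mul_mx_diag !mxE mulr_sumr.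
  apply: ler_sum => i _; rewrite !mxE.
  have -> : (y i 0)^* * d 0 i * y i 0 = d 0 i * ((y i 0)^* * y i 0) by ring.
  have c0 : 0 <= (y i 0)^* * y i 0 by rewrite mulrC mul_conjC_ge0.
  have dr : d 0 i = f (complex.Re (d 0 i)).
    by rewrite RRe_real //; exact: (mxOverP dreal).
  rewrite dr; apply: ler_wpM2r => //.
  by rewrite lecR.
by rewrite lecR.
Qed.

End Spec.

End Main.
Section Final.
Variable R : realType.

Lemma qf_sn n (M : 'M[R]_n.+1) x : `|qf M x| <= spec_norm M * dot x x.
Proof.
have e : qf M x = dot x (M *m x) by rewrite /qf /dot mulmxA.
have h1 := cs_dot x (M *m x).
have h2 := sn_sq M x.
have s0 := sn_ge0 M.
have a0 := dot_ge0 x.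
have c0 := dot_ge0 (M *m x).
rewrite e; move: h1 h2 s0 a0 c0.
set b := dot x (M *m x); set a := dot x x; set c := dot (M *m x) _; set s := spec_norm M.
move=> h1 h2 s0 a0 c0.
have h3 : b ^+ 2 <= (s * a) ^+ 2.
  have -> : (s * a) ^+ 2 = a * (s ^+ 2 * a) by ring.
  exact: le_trans h1 (ler_wpM2l a0 h2).
have sa0 : 0 <= s * a by rewrite mulr_ge0.
by rewrite -(ger0_norm sa0) -ler_sqr ?nnegrE // real_normK ?num_real // ger0_norm.
Qed.

Lemma entry n (P : 'M[R]_n) a b :
  ((delta_mx a 0 : 'cV[R]_n)^T *m P *m (delta_mx b 0 : 'cV[R]_n)) 0 0 = P a b.
Proof. by rewrite trmx_delta -rowE -colE !mxE. Qed.

Lemma qf_add n (P : 'M[R]_n) (u v : 'cV[R]_n) :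
  qf P (u + v) = qf P u + qf P v + (u^T *m P *m v) 0 0 + (v^T *m P *m u) 0 0.
Proof.
rewrite /qf [(u + v)^T]linearD /= !mulmxDl !mulmxDr !eadd.
lra.
Qed.

Lemma psd_entry n (P : 'M[R]_n) W : psd P -> (forall a, P a a <= W) ->
  forall a b, `|P a b| <= W.
Proof.
move=> hP hW a b.
pose eu : 'cV[R]_n := delta_mx a 0; pose ev : 'cV[R]_n := delta_mx b 0.
have h1 := hP.2 (eu + ev).
have h2 := hP.2 (eu + (- ev)).
have sab : P b a = P a b.
  by have := congr1 (fun M : 'M[R]_n => M a b) hP.1; rewrite mxE.
move: h1 h2; rewrite -!/(qf _ _) !qf_add /qf !entry.
rewrite [(- ev)^T]raddfN /= !mulNmx !mulmxN ?opprK !eopp !entry sab.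
have := hW a; have := hW b.
rewrite ler_norml; move=> *; apply/andP; split; lra.
Qed.

Lemma qf_abs n (M : 'M[R]_n) y :
  `|qf M y| <= \sum_a \sum_b `|M a b| * (`|y a 0| * `|y b 0|).
Proof.
have e : qf M y = \sum_a \sum_b y a 0 * M a b * y b 0.
  rewrite /qf mxE exchange_big /=; apply: eq_bigr => b _.
  rewrite mxE mulr_suml; apply: eq_bigr => a _; by rewrite mxE.
rewrite e; apply: le_trans (ler_norm_sum _ _ _) _; apply: ler_sum => a _.
apply: le_trans (ler_norm_sum _ _ _) _; apply: ler_sum => b _.
rewrite !normrM; lra.
Qed.

Lemma qf_seq_bound n (M : 'M[R]_n.+1) (y : nat -> 'cV[R]_n.+1) C :
  (forall a J, \sum_(j < J) `|y j a 0| <= C) ->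
  forall J, \sum_(j < J) `|qf M (y j)| <= (\sum_a \sum_b `|M a b|) * C * C.
Proof.
move=> hy J.
have C0 : 0 <= C by have := hy ord0 0%N; rewrite big_ord0.
have hb : forall j b, `|y j b 0| <= C.
  move=> j b; apply: le_trans (hy b j.+1); rewrite big_ord_recr /= lerDr.
  by apply: sumr_ge0 => k _.
apply: (@le_trans _ _ (\sum_(j < J) \sum_a \sum_b `|M a b| * C * `|y j a 0|)).
  apply: ler_sum => j _; apply: le_trans (qf_abs _ _) _.
  apply: ler_sum => a _; apply: ler_sum => b _.
  rewrite -mulrA ler_wpM2l // mulrC ler_wpM2r //; exact: hb.
have -> : (\sum_a \sum_b `|M a b|) * C * C = \sum_a \sum_b (`|M a b| * C * C).
  rewrite -mulrA mulr_suml; apply: eq_bigr => a _; rewrite mulr_suml.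
  by apply: eq_bigr => b _; rewrite mulrA.
rewrite exchange_big /=; apply: ler_sum => a _.
rewrite exchange_big /=; apply: ler_sum => b _.
by rewrite -mulr_sumr ler_wpM2l //; [exact: mulr_ge0 | exact: hy].
Qed.

Lemma qf_term_bound n (M : 'M[R]_n.+1) (y : nat -> 'cV[R]_n.+1) C :
  (forall a J, \sum_(j < J) `|y j a 0| <= C) ->
  forall j, `|qf M (y j)| <= (\sum_a \sum_b `|M a b|) * C * C.
Proof.
move=> hy j; apply: le_trans (qf_seq_bound M hy j.+1).
by rewrite big_ord_recr /= lerDr; apply: sumr_ge0 => k _.
Qed.


Lemma qf_scalar n (a : R) (x : 'cV[R]_n) : qf a%:M x = a * dot x x.
Proof. by rewrite /qf /dot mul_mx_scalar -scalemxAl mxE. Qed.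

Lemma iter_psd n m (A : 'M[R]_n.+1) (B : 'M[R]_(n.+1, m)) (Rm : 'M[R]_m)
  (S P0 : 'M[R]_n.+1) (Delta : nat -> 'M[R]_n.+1) (c : R) :
  pd S -> pd Rm -> psd P0 -> (forall k, Defs.symmetric (Delta k)) ->
  c < lambda_min S -> (forall k, spec_norm (Delta k) <= c) ->
  forall i, psd (inexact_vi A B Rm S P0 Delta i).
Proof.
move=> hS hR hP0 hD hc hsn; elim => [|i [sP pP]] //=.
split.
  by rewrite /Defs.symmetric linearD /= ric_sym ?hD //; [exact: hS.1 | exact: hR.1].
move=> x; rewrite -/(qf _ _) qfD.
have h1 := ric_lower A B S (conj sP pP) hR x.
have h2 := lmin_qf hS x.
have h3 := qf_sn (Delta i) x.
have h4 : spec_norm (Delta i) * dot x x <= c * dot x x.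
  by rewrite ler_wpM2r ?dot_ge0.
have h5 : c * dot x x <= lambda_min S * dot x x.
  by rewrite ler_wpM2r ?dot_ge0 // ltW.
move: h3; rewrite ler_norml => /andP[h3 _].
lra.
Qed.

Lemma iter_upper n m (A : 'M[R]_n.+1) (B : 'M[R]_(n.+1, m)) (Rm : 'M[R]_m)
  (S P0 : 'M[R]_n.+1) (Delta : nat -> 'M[R]_n.+1) (c : R) (K : 'M[R]_(m, n.+1)) :
  pd S -> pd Rm -> psd P0 -> (forall k, Defs.symmetric (Delta k)) ->
  c < lambda_min S -> (forall k, spec_norm (Delta k) <= c) ->
  let N := A + B *m K in
  let Q := K^T *m Rm *m K + S + (lambda_min S)%:M in
  forall i x, qf (inexact_vi A B Rm S P0 Delta i) x <=
    qf P0 (N ^+ i *m x) + \sum_(j < i) qf Q (N ^+ j *m x).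
Proof.
move=> hS hR hP0 hD hc hsn N Q i.
have hpsd := iter_psd A B hS hR hP0 hD hc hsn.
elim: i => [|i IH] x.
  by rewrite /= big_ord0 expr0 mul1mx addr0.
have step : qf (inexact_vi A B Rm S P0 Delta i.+1) x <=
    qf (inexact_vi A B Rm S P0 Delta i) (N *m x) + qf Q x.
  rewrite /= (qfD _ (Delta i)) /Q (qfD _ (lambda_min S)%:M) (qfD (K^T *m Rm *m K)) qf_mul qf_scalar.
  have h1 := ric_upper A B S (hpsd i) hR K x.
  have h3 := qf_sn (Delta i) x.
  have h4 : spec_norm (Delta i) * dot x x <= c * dot x x.
    by rewrite ler_wpM2r ?dot_ge0.
  have h5 : c * dot x x <= lambda_min S * dot x x.
    by rewrite ler_wpM2r ?dot_ge0 // ltW.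
  move: h3; rewrite ler_norml => /andP[_ h3].
  rewrite -/N in h1; lra.
apply: le_trans step _.
apply: le_trans (lerD (IH (N *m x)) (lexx (qf Q x))) _.
rewrite big_ord_recl /= expr0 mul1mx.
have e : forall j, N ^+ j *m (N *m x) = N ^+ j.+1 *m x.
  by move=> j; rewrite mulmxA mulmxE -exprSr.
rewrite e; under eq_bigr do rewrite e.
rewrite /bump /=; lra.
Qed.

End Final.


Theorem corollary1 (R : realType) (n m : nat) (hn : (0 < n)%N) (hm : (0 < m)%N)
  (A : 'M[R]_n) (B : 'M[R]_(n, m)) (S : 'M[R]_n) (Rm : 'M[R]_m)
  (hS : pd S) (hR : pd Rm) (hAB : stabilizable A B)
  (P0 : 'M[R]_n) (hP0 : psd P0) :
  compact (closure (reach_set A B Rm S P0)).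
Proof.
case: n hn A B S hS hAB P0 hP0 => [//|n] _ A B S hS hAB P0 hP0.
have [K hK] := hAB.
set N := A + B *m K.
set Q := K^T *m Rm *m K + S + (lambda_min S)%:M.
pose e (a : 'I_n.+1) : 'cV[R]_n.+1 := delta_mx a 0.
have hsum : forall p : 'I_n.+1 * 'I_n.+1, exists c : R,
    forall J, \sum_(j < J) `|(N ^+ j *m e p.1) p.2 0| <= c.
  by move=> p; exact: schur_summable hK (e p.1) p.2.
have [cf hcf] := fin_all_exists hsum.
pose Cu := \sum_p cf p.
have cf0 : forall p, 0 <= cf p by move=> p; have := hcf p 0%N; rewrite big_ord0.
have hCu : forall a k J, \sum_(j < J) `|(N ^+ j *m e a) k 0| <= Cu.
  move=> a k J; apply: le_trans (hcf (a, k) J) _.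
  rewrite /Cu (bigD1 (a, k)) //= lerDl; apply: sumr_ge0 => p _; exact: cf0.
pose W := (\sum_a \sum_b `|P0 a b|) * Cu * Cu + (\sum_a \sum_b `|Q a b|) * Cu * Cu.
apply: (@compact_closure_bounded _ _ _ W).
move=> M [Delta [i [hD [[c [hc hsn]] ->]]]].
apply: psd_entry; first exact: (iter_psd A B hS hR hP0 hD hc hsn).
move=> a.
have hy : forall k J, \sum_(j < J) `|(N ^+ j *m e a) k 0| <= Cu by move=> k J; exact: hCu.
have h := iter_upper A B K hS hR hP0 hD hc hsn i (e a).
rewrite -/N -/Q in h.
rewrite -(entry (inexact_vi A B Rm S P0 Delta i) a a) -/(qf _ _).
apply: le_trans h _; apply: lerD.
  apply: le_trans (ler_norm _) _.
  exact: (@qf_term_bound _ _ P0 (fun j => N ^+ j *m e a) Cu hy i).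
apply: (@le_trans _ _ (\sum_(j < i) `|qf Q (N ^+ j *m e a)|)).
  by apply: ler_sum => j _; exact: ler_norm.
exact: (@qf_seq_bound _ _ Q (fun j => N ^+ j *m e a) Cu hy i).
Qed.
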